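(* For every integer $l\ge1$, let $\mathcal{I}_6(l)$ be the index coding instance on $[4l+1]$ with $A_{2i-1}=\{2j: j\in[2l]\setminus\{i\}\}\cup\{4l+1\}$ and $A_{2i}=\{2i-1\}$ for $i\in[2l]$, and $A_{4l+1}=\{2i-1: i\in[2l]\}$. Then $\beta_{\text{R}}(\mathcal{I}_6(l))=3l+\tfrac12$.
   Context: Recursive scheme for an instance with side-information sets $A_i\subseteq[m]\setminus\{i\}$: set $\beta_{\text{R}}(\{i\})=1$ for all $i\in[m]$, and for $M\subseteq[m]$ with $|M|\ge2$ define recursively $$\beta_{\text{R}}(M)=\min\max_{i\in M}\sum_{j\in[n]:\,M_j\not\subseteq A_i}\gamma_j\,\beta_{\text{R}}(M_j),$$ where the minimum is over finite families of nonempty proper subsets $M_1,\dots,M_n\subsetneq M$ and weights $\gamma_j\in[0,1]$ with $\sum_{j:\,i\in M_j}\gamma_j\ge1$ for every $i\in M$. Then $\beta_{\text{R}}(\mathcal{I})=\beta_{\text{R}}([m])$. *)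

(* Defs.v *)
From HB Require Import structures.
From mathcomp Require Import classical_sets reals.
From mathcomp Require Import all_boot all_order all_algebra.
Set Implicit Arguments. Unset Strict Implicit. Unset Printing Implicit Defensive.
Import Order.TTheory GRing.Theory Num.Theory.
Local Open Scope ring_scope.


(* An index coding instance on [m] (represented as 'I_m, 0-based) is given by
   side-information sets A i \subset [m] \ {i}. *)

Section Recursive.
Variables (R : realType) (m : nat) (A : 'I_m -> {set 'I_m}).

Definition valid_family (M : {set 'I_m}) (fam : seq ({set 'I_m} * R)) : Prop :=
  [/\ forall p, p \in fam -> (p.1 != set0) /\ (p.1 \proper M),
      forall p, p \in fam -> 0 <= p.2 <= 1 &
      forall i, i \in M -> 1 <= \sum_(p <- fam | i \in p.1) p.2].

Definition family_cost (beta : {set 'I_m} -> R) (M : {set 'I_m})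
    (fam : seq ({set 'I_m} * R)) : R :=
  \big[Num.max/0]_(i in M) \sum_(p <- fam | ~~ (p.1 \subset A i)) p.2 * beta p.1.

(* beta_R with fuel: level n.+1 uses level n on the (strictly smaller) proper
   subsets; singletons get 1. *)
Fixpoint betaR_fuel (n : nat) (M : {set 'I_m}) : R :=
  match n with
  | 0 => 1
  | n'.+1 =>
      if (#|M| <= 1)%N then 1
      else inf [set v | exists fam, valid_family M fam /\
                                   v = family_cost (betaR_fuel n') M fam]%classic
  end.

Definition betaR (M : {set 'I_m}) : R := betaR_fuel #|M| M.

Definition betaR_inst : R := betaR setT.
End Recursive.

(* Paper's relation on 1-based indices for I_6(l): q \in A_p. *)
Definition I6_rel (l p q : nat) : bool :=
  if (p == 4 * l + 1)%N then (odd q && (q <= 4 * l - 1))%N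
  else if odd p then ((~~ odd q) && (1 <= q <= 4 * l)%N && (q != p + 1)%N)
                     || (q == 4 * l + 1)%N
  else (q == p - 1)%N.

(* I_6(l) on 'I_(4l+1): element x : 'I_(4l+1) is paper element x+1. *)
Definition I6 (l : nat) : 'I_(4 * l + 1) -> {set 'I_(4 * l + 1)} :=
  fun x => [set y : 'I_(4 * l + 1) | I6_rel l (x + 1)%N (y + 1)%N].

(* Main.v *)
Require Import Defs.
From mathcomp Require Import classical_sets reals.
From mathcomp Require Import all_boot all_order all_algebra.
From mathcomp Require Import ring lra zify.
Import Order.TTheory GRing.Theory Num.Theory.
Local Open Scope ring_scope.
Set Implicit Arguments. Unset Strict Implicit. Unset Printing Implicit Defensive.
Section Generic.
Variables (R : realType) (m : nat) (A : 'I_m -> {set 'I_m}).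
Local Notation fuel := (betaR_fuel R A).
Local Notation cost := (family_cost A).

Lemma fuel_small n (M : {set 'I_m}) : (#|M| <= 1)%N -> fuel n M = 1.
Proof. by case: n => [|n] //= ->. Qed.

Lemma cost_ge0 (beta : {set 'I_m} -> R) (M : {set 'I_m}) fam : 0 <= cost beta M fam.
Proof.
rewrite /family_cost; elim/big_rec: _ => //= i x _ hx.
by rewrite le_max hx orbT.
Qed.

Definition fam1 (M : {set 'I_m}) : seq ({set 'I_m} * R) :=
  [seq ([set x], 1) | x <- enum M].

Lemma fam1_valid (M : {set 'I_m}) : (1 < #|M|)%N -> valid_family M (fam1 M).
Proof.
move=> hM; split.
- move=> p /mapP [x]; rewrite mem_enum => xM -> /=; split.
    by apply/set0Pn; exists x; rewrite set11.
  by rewrite properEcard sub1set xM cards1.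
- by move=> p /mapP [x _ ->] /=; rewrite ler01 lexx.
- move=> i iM; rewrite big_map big_enum_cond /= (bigD1 i) /=; last by rewrite iM set11.
  rewrite lerDl; apply: sumr_ge0 => *; exact: ler01.
Qed.

Lemma fuel_ub n (M : {set 'I_m}) fam : (1 < #|M|)%N -> valid_family M fam ->
  fuel n.+1 M <= cost (fuel n) M fam.
Proof.
move=> h v; rewrite /= leqNgt h /=; apply: ge_inf.
  by exists 0 => x [f [_ ->]]; exact: cost_ge0.
by exists fam.
Qed.

Lemma fuel_lb n (M : {set 'I_m}) b : (1 < #|M|)%N ->
  (forall fam, valid_family M fam -> b <= cost (fuel n) M fam) -> b <= fuel n.+1 M.
Proof.
move=> h H; rewrite /= leqNgt h /=; apply: lb_le_inf.
  by exists (cost (fuel n) M (fam1 M)); exists (fam1 M); split => //; exact: fam1_valid.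
by move=> x [f [vf ->]]; exact: H.
Qed.

Lemma fuel_ge0 n (M : {set 'I_m}) : 0 <= fuel n M.
Proof.
case: n => [|n]; first exact: ler01.
case: (leqP #|M| 1) => h; first by rewrite fuel_small // ler01.
apply: fuel_lb => // fam _; exact: cost_ge0.
Qed.

Lemma cost_le (beta : {set 'I_m} -> R) (M : {set 'I_m}) (fam : seq ({set 'I_m} * R)) (c : R) : 0 <= c ->
  (forall i, i \in M -> \sum_(p <- fam | ~~ (p.1 \subset A i)) p.2 * beta p.1 <= c) ->
  cost beta M fam <= c.
Proof. by move=> c0 H; apply: bigmax_le. Qed.

Lemma fuel_single_ub n (M : {set 'I_m}) (c : nat) : (1 < #|M|)%N ->
  (forall i, i \in M -> (#|[set x in M | x \notin A i]| <= c)%N) -> fuel n.+1 M <= c%:R.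
Proof.
move=> h H; apply: le_trans (fuel_ub n h (fam1_valid h)) _.
apply: cost_le => // i iM; rewrite big_map big_enum_cond /=.
under eq_bigr => x _ do rewrite fuel_small ?cards1 // mul1r.
rewrite sumr_const ler_nat; apply: leq_trans (H i iM).
by apply: subset_leq_card; apply/subsetP => x; rewrite !inE unfold_in /= sub1set.
Qed.
End Generic.
Section Dual.
Variables (R : realType) (m : nat) (A : 'I_m -> {set 'I_m}).
Local Notation cost := (family_cost A).

Lemma cost_ge (beta : {set 'I_m} -> R) (M : {set 'I_m}) (fam : seq ({set 'I_m} * R))
    x y (u : 'I_m -> R) :
  valid_family M fam -> x \in M -> y \in M -> (forall k, 0 <= u k) ->
  (forall N : {set 'I_m}, N != set0 -> N \proper M ->
     2 * (\sum_(k in N) u k) <=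
     beta N * ((~~ (N \subset A x))%:R + (~~ (N \subset A y))%:R)) ->
  \sum_(k in M) u k <= cost beta M fam.
Proof.
move=> [v1 v2 v3] xM yM u0 H.
pose c i := \sum_(p <- fam | ~~ (p.1 \subset A i)) p.2 * beta p.1.
have cx : c x <= cost beta M fam by apply: (le_bigmax_cond _ (fun i => c i) xM).
have cy : c y <= cost beta M fam by apply: (le_bigmax_cond _ (fun i => c i) yM).
suff : 2 * \sum_(k in M) u k <= c x + c y by lra.
have -> : c x + c y = \sum_(p <- fam) p.2 * beta p.1 *
    ((~~ (p.1 \subset A x))%:R + (~~ (p.1 \subset A y))%:R).
  rewrite /c !(big_mkcond (fun p => ~~ _)) -big_split /=; apply: eq_bigr => p _.
  by case: (p.1 \subset A x); case: (p.1 \subset A y); rewrite /=; ring.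
apply: le_trans (_ : \sum_(p <- fam) p.2 * (2 * \sum_(k in p.1) u k) <= _); last first.
  rewrite big_seq_cond [X in _ <= X]big_seq_cond; apply: ler_sum => p /andP [pf _].
  have [n0 pr] := v1 p pf; have /andP [g0 _] := v2 p pf.
  by rewrite -mulrA; apply: ler_wpM2l => //; apply: H.
have -> : \sum_(p <- fam) p.2 * (2 * \sum_(k in p.1) u k) =
    2 * \sum_k (u k * \sum_(p <- fam | k \in p.1) p.2).
  rewrite mulr_sumr; under eq_bigr => p _ do rewrite mulrCA mulr_sumr.
  under eq_bigr => p _ do rewrite mulr_sumr big_mkcond.
  rewrite exchange_big; apply: congr_big => // i _.
  rewrite [in RHS]big_mkcond !mulr_sumr; apply: eq_bigr => p _.
  by case: ifP => _; ring.
apply: ler_wpM2l => //.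
have Sge0 k : 0 <= \sum_(p <- fam | k \in p.1) p.2.
  by rewrite big_seq_cond; apply: sumr_ge0 => p /andP [pf _]; have /andP [] := v2 p pf.
rewrite [X in _ <= X](bigID (fun k => k \in M)) /=.
apply: le_trans (_ : \sum_(k in M) u k * \sum_(p <- fam | k \in p.1) p.2 <= _).
  apply: ler_sum => k kM; rewrite -[X in X <= _]mulr1; apply: ler_wpM2l => //; exact: v3.
rewrite lerDl; apply: sumr_ge0 => k _; exact: mulr_ge0.
Qed.
End Dual.
Section Spec.
Variables (R : realType) (l : nat).
Hypothesis hl : (1 <= l)%N.
Local Notation m := (4 * l + 1)%N.
Local Notation A := (@I6 l).
Local Notation fuel := (betaR_fuel R (@I6 l)).

Definition isA (x : nat) := ~~ odd x && (x != 4 * l)%N.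

Lemma odd4 k : odd (4 * k) = false.
Proof. by rewrite oddM. Qed.

Lemma even_half y : odd y = false -> y = (2 * y./2)%N.
Proof. by move=> oy; rewrite -[y in LHS]odd_double_half oy add0n -mul2n. Qed.

Lemma odd_half y : odd y = true -> y = (2 * y./2).+1%N.
Proof. by move=> oy; rewrite -[y in LHS]odd_double_half oy add1n -mul2n. Qed.

Lemma memA (x y : 'I_m) : (y \in A x) =
  if (x == 4 * l :> nat)%N then isA y
  else if odd x then (y.+1 == x)%N
  else (odd y && (y != x.+1 :> nat)%N) || (y == 4 * l :> nat)%N.
Proof.
have xm := ltn_ord x; have ym := ltn_ord y.
rewrite inE /I6_rel eqn_add2r.
case: eqP => [xz|xz].
  rewrite /isA oddD /=; case oy: (odd y) => //=.
  have := even_half oy => ey; apply/idP/idP; lia.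
rewrite oddD /=; case ox: (odd x) => /=.
  by apply/idP/idP; lia.
rewrite oddD /=; case oy: (odd y) => /=.
  have := odd_half oy => ey.
  by apply/idP/idP; lia.
by apply/idP/idP; lia.
Qed.


Definition nu (x : nat) : R := if odd x then 1 else 2^-1.
Definition gfun (N : {set 'I_m}) : R :=
  if [forall x in N, isA x] then #|N|%:R else \sum_(x in N) nu x.
Definition good (N : {set 'I_m}) :=
  [forall x in N, isA x] || [forall x in N, x == 4 * l :> nat].

Lemma nu_ge0 x : 0 <= nu x.
Proof. by rewrite /nu; case: odd => //; rewrite invr_ge0 ler0n. Qed.

Lemma nu_le1 x : nu x <= 1.
Proof. rewrite /nu; case: odd => //; lra. Qed.

Lemma notinAx (x : 'I_m) : x \notin A x.
Proof.
have xm := ltn_ord x.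
rewrite memA; case: eqP => [xz|xz].
  by rewrite /isA xz eqxx andbF.
case ox: (odd x) => /=; first by lia.
done.
Qed.

Lemma nu_le_g (N : {set 'I_m}) : \sum_(k in N) nu k <= gfun N.
Proof.
rewrite /gfun; case: ifP => [/forall_inP hA | _] //.
rewrite -sumr_const; apply: ler_sum => k kN.
move: (hA k kN); rewrite /isA /nu => /andP [/negbTE -> _]; lra.
Qed.

Lemma zlt : (4 * l < m)%N. Proof. lia. Qed.
Definition zord : 'I_m := Ordinal zlt.

Lemma good_bound (N : {set 'I_m}) (b : R) : 1 <= b -> gfun N <= b ->
  good N -> 2 * \sum_(k in N) nu k <= b.
Proof.
move=> b1 gb gN.
have hnu : forall k, k \in N -> nu k = 2^-1.
  move=> k kN; rewrite /nu; case/orP: gN => /forall_inP /(_ k kN).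
    by rewrite /isA => /andP [/negbTE ->].
  by move/eqP ->; rewrite odd4.
have -> : 2 * \sum_(k in N) nu k = #|N|%:R.
  rewrite (eq_bigr (fun _ => 2^-1)) // sumr_const mulrnAr mulfV //.
  by rewrite pnatr_eq0.
case/orP: (gN) => [hA | /forall_inP hz].
  by move: gb; rewrite /gfun hA.
apply: le_trans b1; rewrite -[1]/(1%:R) ler_nat.
apply: leq_trans (_ : #|[set zord]| <= 1)%N; last by rewrite cards1.
apply: subset_leq_card; apply/subsetP => k kN; rewrite inE; apply/eqP/val_inj => /=.
exact/eqP/hz.
Qed.


Definition cond (x y : 'I_m) (N : {set 'I_m}) :=
  (~~ (N \subset A x) && ~~ (N \subset A y)) ||
  (good N && (~~ (N \subset A x) || ~~ (N \subset A y))).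

Definition IHprop n (M : {set 'I_m}) := forall N : {set 'I_m}, N != set0 -> N \proper M ->
  1 <= fuel n N /\ gfun N <= fuel n N.

Lemma nu_case n (M : {set 'I_m}) fam x y :
  valid_family M fam -> x \in M -> y \in M -> ~~ [forall k in M, isA k] ->
  IHprop n M -> (forall N, N != set0 -> N \proper M -> cond x y N) ->
  gfun M <= family_cost A (fuel n) M fam.
Proof.
move=> vf xM yM nA IH hc.
have -> : gfun M = \sum_(k in M) nu k by rewrite /gfun (negbTE nA).
apply: (cost_ge vf xM yM nu_ge0) => N N0 NM.
have [f1 fg] := IH N N0 NM.
have s1 := nu_le_g N.
case/orP: (hc N N0 NM) => [/andP [-> ->] | /andP [gN h]] /=.
  lra.
have gb := good_bound f1 fg gN.
by case/orP: h => -> /=; case: (~~ _) => /=; lra.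
Qed.

Lemma sum_ind (N : {set 'I_m}) r : r \in N -> \sum_(k in N) ((k == r)%:R : R) = 1.
Proof.
move=> rN; rewrite (bigD1 r) //= eqxx big1 ?addr0 // => k /andP [_ /negbTE ->] //.
Qed.

Lemma sum_ind0 (N : {set 'I_m}) r : r \notin N -> \sum_(k in N) ((k == r)%:R : R) = 0.
Proof.
move=> rN; rewrite big1 // => k kN; case: eqP => // e; move: rN; by rewrite -e kN.
Qed.

Lemma one_case n (M : {set 'I_m}) fam : M != set0 ->
  valid_family M fam -> IHprop n M -> 1 <= family_cost A (fuel n) M fam.
Proof.
move=> /set0Pn [r rM] vf IH.
rewrite -(sum_ind rM); apply: (cost_ge vf rM rM) => [k|N N0 NM]; first by case: eqP.
have [f1 _] := IH N N0 NM.
case rN: (r \in N).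
  rewrite (sum_ind rN).
  have -> : ~~ (N \subset A r).
    by apply/negP => /subsetP /(_ r rN); rewrite (negbTE (notinAx r)).
  rewrite /=; lra.
rewrite (sum_ind0 (negbT rN)) mulr0; apply: mulr_ge0; first lra.
by rewrite addr_ge0.
Qed.


Lemma memA_z (x y : 'I_m) : (x == 4 * l :> nat)%N -> (y \in A x) = isA y.
Proof. by move=> h; rewrite memA h. Qed.

Lemma odd_neqz (x : nat) : odd x -> (x == 4 * l)%N = false.
Proof. by move=> ox; apply/negbTE; apply: contraTN ox => /eqP ->; rewrite odd4. Qed.

Lemma memA_b (x y : 'I_m) : odd x -> (y \in A x) = (y.+1 == x)%N.
Proof. by move=> ox; rewrite memA odd_neqz // ox. Qed.

Lemma memA_a (x y : 'I_m) : isA x ->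
  (y \in A x) = (odd y && (y != x.+1 :> nat)%N) || (y == 4 * l :> nat)%N.
Proof. by case/andP => /negbTE ox /negbTE xz; rewrite memA xz ox. Qed.

Lemma isA_pred (b k : 'I_m) : odd b -> (k.+1 == b)%N -> isA k.
Proof.
move=> ob /eqP e; have bm := ltn_ord b.
rewrite /isA; move: ob; rewrite -e /= => /negbTE -> /=; apply/eqP; lia.
Qed.


Lemma cond_intro x y (N : {set 'I_m}) :
  (N \subset A x -> N \subset A y -> False) ->
  (N \subset A x -> good N) -> (N \subset A y -> good N) -> cond x y N.
Proof.
rewrite /cond; case: (N \subset A x); case: (N \subset A y) => /= h1 h2 h3.
- by exfalso; apply: h1.
- by rewrite h2.
- by rewrite h3.
- done.
Qed.

Lemma good_A (N : {set 'I_m}) : (forall k, k \in N -> isA k) -> good N.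
Proof. by move=> h; apply/orP; left; apply/forall_inP. Qed.

Lemma good_z (N : {set 'I_m}) : (forall k, k \in N -> (k == 4 * l :> nat)%N) -> good N.
Proof. by move=> h; apply/orP; right; apply/forall_inP. Qed.

Lemma sub_b (N : {set 'I_m}) (b : 'I_m) : odd b -> N \subset A b -> forall k, k \in N -> (k.+1 == b)%N.
Proof. by move=> ob /subsetP h k kN; rewrite -memA_b //; apply: h. Qed.

Lemma g_case n (M : {set 'I_m}) fam : (1 < #|M|)%N ->
  valid_family M fam -> IHprop n M -> gfun M <= family_cost A (fuel n) M fam.
Proof.
move=> h1 vf IH.
have M0 : M != set0 by rewrite -card_gt0; lia.
have subM (N : {set 'I_m}) : N \proper M -> forall k, k \in N -> k \in M.
  by move=> NM k kN; apply: (subsetP (proper_sub NM)).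
case allA: [forall k in M, isA k].
  have /set0Pn [r rM] := M0.
  have -> : gfun M = \sum_(k in M) 1 by rewrite /gfun allA sumr_const.
  apply: (cost_ge vf rM rM (u := fun _ => 1)) => [k | N N0 NM]; first exact: ler01.
  have [f1 fg] := IH N N0 NM.
  have NA : [forall k in N, isA k].
    by apply/forall_inP => k kN; move/forall_inP: allA; apply; apply: subM NM k kN.
  have -> : ~~ (N \subset A r).
    have /set0Pn [k kN] := N0.
    apply/negP => /subsetP /(_ k kN); rewrite memA_a; last by move/forall_inP: allA; apply.
    move/forall_inP: NA => /(_ k kN) /andP [/negbTE -> /negbTE ->] //.
  by move: fg; rewrite /gfun NA sumr_const /= => fg; lra.
have nA : ~~ [forall k in M, isA k] by rewrite allA.
case two: [exists b1 in M, exists b2 in M, odd b1 && odd b2 && (b1 != b2)].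
  case/exists_inP: two => b1 b1M /exists_inP [b2 b2M /andP [/andP [o1 o2] ne]].
  apply: (nu_case vf b1M b2M nA IH) => N N0 NM.
  apply: cond_intro.
  - move=> /(sub_b o1) h1' /(sub_b o2) h2'; have /set0Pn [k kN] := N0.
    move: (h1' k kN) (h2' k kN) => /eqP e1 /eqP e2.
    by move: ne; rewrite -val_eqE /= -e1 -e2 eqxx.
  - by move=> /(sub_b o1) h; apply: good_A => k kN; exact: (isA_pred o1 (h k kN)).
  - by move=> /(sub_b o2) h; apply: good_A => k kN; exact: (isA_pred o2 (h k kN)).
have uniqb : forall b c, b \in M -> c \in M -> odd b -> odd c -> b = c.
  move=> b c bM cM ob oc; apply/eqP; apply: contraFT two => ne.
  by apply/exists_inP; exists b => //; apply/exists_inP; exists c => //; rewrite ob oc.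
case one: [exists b in M, odd b].
  case/exists_inP: one => b bM ob.
  case ha: [exists a in M, (a.+1 == b)%N].
    case/exists_inP: ha => a aM ab.
    have aA : isA a := isA_pred ob ab.
    case hz: [exists z in M, (z == 4 * l :> nat)%N].
      apply: (nu_case vf bM aM nA IH) => N N0 NM.
      apply: cond_intro.
      + move=> /(sub_b ob) h /subsetP h2; have /set0Pn [k kN] := N0.
        have ka : k = a by apply/val_inj/eqP; have := h k kN; move: ab => /eqP <-; rewrite eqSS.
        by move: (h2 k kN); rewrite ka (negbTE (notinAx a)).
      + by move=> /(sub_b ob) h; apply: good_A => k kN; exact: (isA_pred ob (h k kN)).
      + move=> /subsetP h; apply: good_z => k kN.
        move: (h k kN); rewrite memA_a // => /orP [/andP [ok nk] | //].
        have kb := uniqb _ _ (subM _ NM _ kN) bM ok ob.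
        by move: nk; rewrite kb (eqP ab) eqxx.
    apply: (nu_case vf aM aM nA IH) => N N0 NM.
    have /set0Pn [k kN] := N0.
    have nsub : ~~ (N \subset A a).
      apply/negP => /subsetP /(_ k kN); rewrite memA_a // => /orP [/andP [ok nk] | kz].
        have kb := uniqb _ _ (subM _ NM _ kN) bM ok ob.
        by move: nk; rewrite kb (eqP ab) eqxx.
      suff : [exists z in M, (z == 4 * l :> nat)%N] by rewrite hz.
      by apply/exists_inP; exists k => //; apply: subM NM k kN.
    by rewrite /cond nsub.
  apply: (nu_case vf bM bM nA IH) => N N0 NM.
  have /set0Pn [k kN] := N0.
  have nsub : ~~ (N \subset A b).
    apply/negP => /(sub_b ob) /(_ k kN) kb.
    suff : [exists a in M, (a.+1 == b)%N] by rewrite ha.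
    by apply/exists_inP; exists k => //; apply: subM NM k kN.
  by rewrite /cond nsub.
have noodd : forall k, k \in M -> odd k = false.
  by move=> k kM; apply: negbTE; apply: contraFN one => ok; apply/exists_inP; exists k.
have [z zM zA] : exists2 z, z \in M & ~~ isA z.
  move: nA; rewrite negb_forall_in => /exists_inP [z zM zA]; by exists z.
have zz : (z == 4 * l :> nat)%N by move: zA; rewrite /isA noodd //= negbK.
have [a aM az] : exists2 a, a \in M & a != z.
  have : (0 < #|M :\ z|)%N by move: h1; rewrite (cardsD1 z M) zM /= add1n ltnS.
  by rewrite card_gt0 => /set0Pn [a]; rewrite !inE => /andP [az aM]; exists a.
have aA : isA a.
  rewrite /isA noodd //=; apply: contra az => /eqP e; apply/eqP/val_inj; rewrite /= e; exact/esym/eqP.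
apply: (nu_case vf aM zM nA IH) => N N0 NM.
apply: cond_intro.
- move=> /subsetP h1' /subsetP h2'; have /set0Pn [k kN] := N0.
  move: (h1' k kN) (h2' k kN); rewrite memA_a // memA_z // noodd ?(subM _ NM _ kN) //=.
  by move=> kz; rewrite /isA kz andbF.
- move=> /subsetP h; apply: good_z => k kN.
  by move: (h k kN); rewrite memA_a // noodd ?(subM _ NM _ kN).
- by move=> /subsetP h; apply: good_A => k kN; move: (h k kN); rewrite memA_z.
Qed.

Lemma LB n : forall M : {set 'I_m}, (#|M| <= n)%N -> M != set0 ->
  1 <= fuel n M /\ gfun M <= fuel n M.
Proof.
elim: n => [|n IHn] M hM M0.
  by move: M0; rewrite -card_gt0; lia.
case: (leqP #|M| 1) => h1.
  rewrite fuel_small //; split => //.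
  have /cards1P [x ->] : #|M| == 1%N by move: M0; rewrite -card_gt0; lia.
  rewrite /gfun; case: ifP => _; first by rewrite cards1.
  by rewrite big_set1; exact: nu_le1.
have IH : IHprop n M.
  move=> N N0 NM; apply: IHn => //; have := proper_card NM; lia.
split; apply: fuel_lb => // fam vf.
  exact: one_case.
exact: g_case.
Qed.


Lemma sum_nu k : \sum_(0 <= i < 4 * k + 1) nu i = (3 * k)%:R + 2^-1.
Proof.
elim: k => [|k IH].
  by rewrite big_nat1 /nu /=; lra.
have -> : (4 * k.+1 + 1 = (4 * k + 1).+4)%N by lia.
rewrite !big_nat_recr //= IH /nu.
have o : odd (4 * k + 1) by rewrite oddD odd4.
rewrite /= o /=.
rewrite mulnS natrD; have h3 : (3%:R : R) = 1 + 1 + 1 by rewrite -!natr1 /=; lra.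
rewrite h3; lra.
Qed.

Lemma one_lt : (1 < m)%N. Proof. lia. Qed.

Lemma g_top : gfun setT = (3 * l)%:R + 2^-1.
Proof.
rewrite /gfun; case: ifP => [/forall_inP h | _].
  by move: (h (Ordinal one_lt) (in_setT _)); rewrite /isA.
rewrite -(sum_nu l) big_mkord; apply: eq_bigl => x; by rewrite in_setT.
Qed.


Lemma lt0' : (0 < m)%N. Proof. lia. Qed.
Lemma lt2' : (2 < m)%N. Proof. lia. Qed.
Lemma lt3' : (3 < m)%N. Proof. lia. Qed.
Definition o0 : 'I_m := Ordinal lt0'.
Definition o1 : 'I_m := Ordinal one_lt.
Definition o2 : 'I_m := Ordinal lt2'.
Definition o3 : 'I_m := Ordinal lt3'.

Lemma e0 : (0 == 4 * l)%N = false. Proof. apply/eqP; lia. Qed.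
Lemma e1 : (1 == 4 * l)%N = false. Proof. apply/eqP; lia. Qed.
Lemma e2 : (2 == 4 * l)%N = false. Proof. apply/eqP; lia. Qed.
Lemma e3 : (3 == 4 * l)%N = false. Proof. apply/eqP; lia. Qed.
Lemma f0 : (4 * l == 0)%N = false. Proof. apply/eqP; lia. Qed.
Lemma f1 : (4 * l == 1)%N = false. Proof. apply/eqP; lia. Qed.
Lemma f2 : (4 * l == 2)%N = false. Proof. apply/eqP; lia. Qed.
Lemma f3 : (4 * l == 3)%N = false. Proof. apply/eqP; lia. Qed.
Lemma ez1 : ((4 * l).+1 == 1)%N = false. Proof. apply/eqP; lia. Qed.
Lemma ez3 : ((4 * l).+1 == 3)%N = false. Proof. apply/eqP; lia. Qed.

Definition S0 : {set 'I_m} := [set x : 'I_m | (x < 4)%N || (x == 4 * l :> nat)%N].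

Lemma S0_cases (i : 'I_m) : i \in S0 -> i = o0 \/ i = o1 \/ i = o2 \/ i = o3 \/ i = zord.
Proof.
rewrite inE => /orP [h | /eqP h].
  have : (i = 0 :> nat \/ i = 1 :> nat \/ i = 2 :> nat \/ i = 3 :> nat)%N by lia.
  move=> [e|[e|[e|e]]].
  - by left; apply: val_inj.
  - by right; left; apply: val_inj.
  - by right; right; left; apply: val_inj.
  - by right; right; right; left; apply: val_inj.
by right; right; right; right; apply: val_inj.
Qed.

Lemma fuel_le_card n (M : {set 'I_m}) : (1 < #|M|)%N -> fuel n.+1 M <= #|M|%:R.
Proof.
move=> h; apply: (@fuel_single_ub R _ _ n _ #|M|) => // i _.
by apply: subset_leq_card; apply/subsetP => x; rewrite inE => /andP [].
Qed.

Lemma fuel_pair_az n (a : 'I_m) : isA a -> fuel n.+1 [set a; zord] <= 1.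
Proof.
move=> aA; have az : a != zord.
  by apply: contraTN aA => /eqP ->; rewrite /isA /= eqxx andbF.
apply: (@fuel_single_ub R _ _ n _ 1) => [|i]; first by rewrite cards2 az.
have zA : zord \in A a by rewrite memA_a //= eqxx orbT.
have aZ : a \in A zord by rewrite memA_z //= eqxx.
move=> /set2P [] ->.
  apply: leq_trans (_ : #|[set a]| <= 1)%N; last by rewrite cards1.
  apply: subset_leq_card; apply/subsetP => x; rewrite inE => /andP [/set2P [] ->].
    by rewrite set11.
  by rewrite zA.
apply: leq_trans (_ : #|[set zord]| <= 1)%N; last by rewrite cards1.
apply: subset_leq_card; apply/subsetP => x; rewrite inE => /andP [/set2P [] ->].
  by rewrite aZ.
by rewrite set11.
Qed.


Lemma bcons (T : Type) (F : T -> R) (P : pred T) x r :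
  \sum_(y <- x :: r | P y) F y = (if P x then F x else 0) + \sum_(y <- r | P y) F y.
Proof. by rewrite big_cons; case: (P x) => //; rewrite add0r. Qed.
Lemma bnil (T : Type) (F : T -> R) (P : pred T) : \sum_(y <- [::] | P y) F y = 0.
Proof. by rewrite big_nil. Qed.

Definition S5 : seq {set 'I_m} :=
  [:: [set o0]; [set o1]; [set o2]; [set o3]; [set o0; zord]; [set o2; zord]; [set o1; o3]].
Definition F5 : seq ({set 'I_m} * R) := [seq (s, 2^-1) | s <- S5].

Lemma oA0 : isA o0. Proof. by rewrite /isA /= e0. Qed.
Lemma oA2 : isA o2. Proof. by rewrite /isA /= e2. Qed.

Lemma S0_o0 : o0 \in S0. Proof. by rewrite inE. Qed.
Lemma S0_o1 : o1 \in S0. Proof. by rewrite inE. Qed.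
Lemma S0_o2 : o2 \in S0. Proof. by rewrite inE. Qed.
Lemma S0_o3 : o3 \in S0. Proof. by rewrite inE. Qed.
Lemma S0_z : zord \in S0. Proof. by rewrite inE /= eqxx orbT. Qed.

Lemma pr_help (P : {set 'I_m}) w : P \subset S0 -> w \in S0 -> w \notin P -> P \proper S0.
Proof. by move=> PS wS wP; apply/properP; split => //; exists w. Qed.

Ltac ordsimp := rewrite ?inE -?val_eqE /= ?e0 ?e1 ?e2 ?e3 ?f0 ?f1 ?f2 ?f3 ?ez1 ?ez3 ?odd4 ?eqxx ?orbT /=.

Lemma v1h (x : 'I_m) (P : {set 'I_m}) w : x \in P -> P \subset S0 -> w \in S0 -> w \notin P ->
  P != set0 /\ P \proper S0.
Proof. by move=> xP PS wS wP; split; [apply/set0Pn; exists x | apply: pr_help wS wP]. Qed.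

Ltac ordsimp2 := rewrite -?val_eqE /= ?e0 ?e1 ?e2 ?e3 ?f0 ?f1 ?f2 ?f3 ?ez1 ?ez3 ?odd4 ?eqxx ?orbT /=.

Lemma F5_valid : valid_family S0 F5.
Proof.
have HS := (S0_o0, S0_o1, S0_o2, S0_o3, S0_z).
split.
- move=> p /mapP [s sS ->] /=; move: sS; rewrite !in_cons in_nil orbF.
  case/orP => [/eqP -> | ]; first by apply: (v1h (x := o0) (w := o1)); ordsimp; rewrite ?subUset ?sub1set ?HS.
  case/orP => [/eqP -> | ]; first by apply: (v1h (x := o1) (w := o0)); ordsimp; rewrite ?subUset ?sub1set ?HS.
  case/orP => [/eqP -> | ]; first by apply: (v1h (x := o2) (w := o0)); ordsimp; rewrite ?subUset ?sub1set ?HS.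
  case/orP => [/eqP -> | ]; first by apply: (v1h (x := o3) (w := o0)); ordsimp; rewrite ?subUset ?sub1set ?HS.
  case/orP => [/eqP -> | ]; first by apply: (v1h (x := o0) (w := o1)); ordsimp; rewrite ?subUset ?sub1set ?HS.
  case/orP => [/eqP -> | ]; first by apply: (v1h (x := o2) (w := o0)); ordsimp; rewrite ?subUset ?sub1set ?HS.
  by move/eqP ->; apply: (v1h (x := o1) (w := o0)); ordsimp; rewrite ?subUset ?sub1set ?HS.
- by move=> p /mapP [s _ ->] /=; apply/andP; split; lra.
- move=> i /S0_cases [|[|[|[|]]]] ->; rewrite big_map !bcons bnil /=; ordsimp; lra.
Qed.

Lemma fuel1 n (x : 'I_m) : fuel n [set x] = 1.
Proof. by rewrite fuel_small // cards1. Qed.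

Lemma U2 n : (2 <= n)%N -> fuel n.+1 S0 <= 7 / 2.
Proof.
move=> hn; have S0c : (1 < #|S0|)%N.
  apply/card_gt1P; exists o0, o1; split; [exact: S0_o0 | exact: S0_o1 | by []].
apply: le_trans (fuel_ub _ _ S0c F5_valid) _.
case: n hn => [|[|n]] // _.
have f02 := fuel_pair_az n.+1 oA0; have f22 := fuel_pair_az n.+1 oA2.
have c2 : #|[set o1; o3]| = 2%N by rewrite cards2.
have f13 : fuel n.+2 [set o1; o3] <= 2.
  by have := fuel_le_card n.+1 (M := [set o1; o3]); rewrite c2; apply.
have g02 := fuel_ge0 R A n.+2 [set o0; zord].
have g22 := fuel_ge0 R A n.+2 [set o2; zord].
have g13 := fuel_ge0 R A n.+2 [set o1; o3].
apply: cost_le; first lra.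
move=> i iS; rewrite big_map !bcons bnil !fuel1.
move: f02 f22 f13 g02 g22 g13.
set q1 := fuel _ [set o0; zord]; set q2 := fuel _ [set o2; zord]; set q3 := fuel _ [set o1; o3].
move=> f02 f22 f13 g02 g22 g13.
move: iS => /S0_cases [|[|[|[|]]]] ->.
all: rewrite /= !subUset !sub1set !memA /= /isA; ordsimp2; lra.
Qed.


Definition Sk (k : nat) : {set 'I_m} := [set x : 'I_m | (4 * k <= x < 4 * k + 4)%N].
Definition ordn (j : nat) : 'I_m := insubd zord j.
Lemma val_ordn j : (j < m)%N -> val (ordn j) = j.
Proof. by move=> h; rewrite val_insubd h. Qed.

Lemma odd4D k j : odd (4 * k + j) = odd j.
Proof. by rewrite oddD odd4. Qed.

Lemma Sk_card k : (#|Sk k| <= 4)%N.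
Proof.
apply: leq_trans (_ : #|[seq ordn j | j <- iota (4 * k) 4]| <= 4)%N.
  apply: subset_leq_card; apply/subsetP => x; rewrite inE => hx.
  have -> : x = ordn x by apply: val_inj; rewrite val_ordn.
  by apply: map_f; rewrite mem_iota; lia.
by apply: leq_trans (card_size _) _; rewrite size_map size_iota.
Qed.

Lemma fuel_Sk n k : (k < l)%N -> fuel n.+1 (Sk k) <= 3%:R.
Proof.
move=> kl.
have v0 : val (ordn (4 * k)) = (4 * k)%N by rewrite val_ordn //; lia.
have v1 : val (ordn (4 * k + 1)) = (4 * k + 1)%N by rewrite val_ordn //; lia.
have v2 : val (ordn (4 * k + 2)) = (4 * k + 2)%N by rewrite val_ordn //; lia.
have v3 : val (ordn (4 * k + 3)) = (4 * k + 3)%N by rewrite val_ordn //; lia.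
have inS j : (j < 4)%N -> ordn (4 * k + j) \in Sk k.
  by move=> hj; rewrite inE val_ordn; lia.
apply: (@fuel_single_ub R _ _ n _ 3) => [|i iS].
  apply/card_gt1P; exists (ordn (4 * k + 0)), (ordn (4 * k + 1)); split; try exact: inS.
  by rewrite -val_eqE /= addn0 v0 v1; apply/eqP; lia.
have [y yS yA] : exists2 y, y \in Sk k & y \in A i.
  move: iS; rewrite inE => hi.
  have : (i = 4 * k :> nat \/ i = 4 * k + 1 :> nat \/ i = 4 * k + 2 :> nat \/ i = 4 * k + 3 :> nat)%N by lia.
  move=> [e|[e|[e|e]]].
  - exists (ordn (4 * k + 3)); first exact: inS.
    rewrite memA e v3 ?odd4D ?odd4 /=; case: eqP => [|_]; first lia.
    by apply/orP; left; apply/eqP; lia.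
  - exists (ordn (4 * k + 0)); first exact: inS.
    rewrite memA e addn0 v0 ?odd4D ?odd4 /=; case: eqP => [|_]; first lia.
    by apply/eqP; lia.
  - exists (ordn (4 * k + 1)); first exact: inS.
    rewrite memA e v1 ?odd4D ?odd4 /=; case: eqP => [|_]; first lia.
    by apply/orP; left; apply/eqP; lia.
  - exists (ordn (4 * k + 2)); first exact: inS.
    rewrite memA e v2 ?odd4D ?odd4 /=; case: eqP => [|_]; first lia.
    by apply/eqP; lia.
apply: leq_trans (_ : #|Sk k :\ y| <= 3)%N.
  apply: subset_leq_card; apply/subsetP => x; rewrite inE => /andP [xS xA].
  rewrite in_setD1 xS andbT; apply: contraNN xA => /eqP ->; exact: yA.
have := Sk_card k; rewrite (cardsD1 y) yS; lia.
Qed.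


Lemma sum_filter_le (T : eqType) (s : seq T) (P : pred T) (F : T -> R) :
  (forall p, p \in s -> 0 <= F p) -> \sum_(p <- s | P p) F p <= \sum_(p <- s) F p.
Proof.
elim: s => [|x s IH] H; first by rewrite !big_nil.
rewrite !big_cons; have Hx := H x (mem_head _ _).
have IH' : \sum_(p <- s | P p) F p <= \sum_(p <- s) F p.
  by apply: IH => p ps; apply: H; rewrite in_cons ps orbT.
by case: (P x) => //; lra.
Qed.

Definition Ftop : seq ({set 'I_m} * R) :=
  (S0, 1) :: [seq (Sk k, 1) | k <- index_iota 1 l].

Lemma cardT : #|[set: 'I_m]| = (4 * l).+1.
Proof. by rewrite cardsT card_ord addn1. Qed.

Lemma Ftop_valid : (2 <= l)%N -> valid_family setT Ftop.
Proof.
move=> l2.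
have o4v : val (ordn 4) = 4%N by rewrite val_ordn //; lia.
split.
- move=> p; rewrite in_cons => /orP [/eqP -> | /mapP [k kI ->]] /=; split.
  + by apply/set0Pn; exists o0; exact: S0_o0.
  + apply/properP; split; first exact: subsetT.
    by exists (ordn 4); rewrite ?in_setT // inE o4v; apply/negP => /orP []; lia.
  + move: kI; rewrite mem_iota => kI.
    by apply/set0Pn; exists (ordn (4 * k)); rewrite inE val_ordn; lia.
  + move: kI; rewrite mem_iota => kI.
    apply/properP; split; first exact: subsetT.
    by exists o0; rewrite ?in_setT // inE /=; lia.
- move=> p; rewrite in_cons => /orP [/eqP -> | /mapP [k kI ->]] /=; lra.
- move=> i _; rewrite bcons.
  case iS: (i \in S0) => /=.
    rewrite -[X in X <= _]addr0 lerD2l big_map; apply: sumr_ge0 => p _ /=; lra.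
  rewrite add0r big_map big_mkcond.
  have iv : (4 <= i < 4 * l)%N by move: iS; rewrite inE => /negbT; have := ltn_ord i; lia.
  have kI : (i %/ 4 \in index_iota 1 l)%N by rewrite mem_iota; lia.
  rewrite (bigD1_seq _ kI (iota_uniq _ _)) /= inE.
  have -> : (4 * (i %/ 4) <= i < 4 * (i %/ 4) + 4)%N by lia.
  rewrite lerDl; apply: sumr_ge0 => k _; case: ifP => _ //; lra.
Qed.

Lemma top_ub : fuel #|[set: 'I_m]| setT <= (3 * l)%:R + 2^-1.
Proof.
rewrite cardT.
case: (ltnP 1 l) => l2.
  apply: le_trans (fuel_ub _ (4 * l) _ (Ftop_valid l2)) _; first by rewrite cardT; lia.
  have hS0 := U2 (n := (4 * l).-1) ltac:(lia).
  have e : ((4 * l).-1.+1 = 4 * l)%N by lia.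
  rewrite e in hS0.
  have hSk : forall k, k \in index_iota 1 l -> fuel (4 * l) (Sk k) <= 3%:R.
    move=> k; rewrite mem_iota => kI.
    have := @fuel_Sk ((4 * l).-1) k ltac:(lia); by rewrite e.
  have g0 := fuel_ge0 R A (4 * l).
  apply: cost_le; first by apply: addr_ge0; [apply: ler0n | rewrite invr_ge0 ler0n].
  move=> i _.
  apply: le_trans (_ : \sum_(p <- Ftop) p.2 * fuel (4 * l) p.1 <= _).
    apply: sum_filter_le => p pF.
    move: pF; rewrite in_cons => /orP [/eqP -> | /mapP [k kI ->]] /=; rewrite mul1r //.
  rewrite bcons /= mul1r big_map.
  apply: le_trans (_ : 7 / 2 + \sum_(k <- index_iota 1 l) (3%:R : R) <= _).
    apply: lerD => //; rewrite big_seq [X in _ <= X]big_seq; apply: ler_sum => k kI.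
    by rewrite mul1r; apply: hSk.
  rewrite sumr_const_nat -[3%:R *+ _]mulr_natr natrB // natrM.
  have h3 : (3%:R : R) = 1 + 1 + 1 by rewrite -!natr1 /=; lra.
  rewrite !h3; lra.
case: (ltnP l 1) => [|l1]; first by lia.
have el : l = 1%N by lia.
have -> : [set: 'I_m] = S0.
  by apply/setP => x; rewrite in_setT inE; have := ltn_ord x; lia.
apply: le_trans (U2 (n := 4 * l) _) _; first by lia.
rewrite el; have h3 : (3%:R : R) = 1 + 1 + 1 by rewrite -!natr1 /=; lra.
rewrite muln1 h3; lra.
Qed.

Theorem main_eq : fuel #|[set: 'I_m]| setT = (3 * l)%:R + 2^-1.
Proof.
apply/eqP; rewrite eq_le top_ub /=.
have [_ h] := @LB #|[set: 'I_m]| setT (leqnn _) ltac:(by apply/set0Pn; exists o0).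
by rewrite -g_top.
Qed.

End Spec.

Unset Implicit Arguments.
Set Strict Implicit.

Theorem proposition9 (R : realType) (l : nat) (hl : (1 <= l)%N) :
  @betaR_inst R (4 * l + 1)%N (@I6 l) = (3 * l)%:R + 2^-1.
Proof. exact: (@main_eq R l hl). Qed.
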